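(* Let $\widehat{V}_2(\mathbf{A};\mathbf{Y}) = \frac{\hat\sigma^2}{n}\Big[1+\frac1n\sum_{i=1}^n\sum_{j=1}^n\mathbf{A}_{ij}\Big]$, let $\mathbf{A}^m\in\mathcal{A}(\mathbf{Y})$ maximize $\mathbf{A}\mapsto\widehat{V}_2(\mathbf{A};\mathbf{Y})$ over $\mathcal{A}(\mathbf{Y})$, let $d_i'=\min\{d_i,n-1\}$ for $i=1,\dots,n$, and let \[\widehat{V}_2'(\mathbf{Y})=\frac{\hat\sigma^2}{n}\Big[1+\frac1n\sum_{i=1}^n d_i'\Big].\] Then $\widehat{V}_2(\mathbf{A}^\circ;\mathbf{Y})\le\widehat{V}_2(\mathbf{A}^m;\mathbf{Y})\le\widehat{V}_2'(\mathbf{Y})$, and $\widehat{V}_2(\mathbf{A}^m;\mathbf{Y})=\widehat{V}_2'(\mathbf{Y})$ whenever there exists a matrix $\mathbf{A}\in\mathcal{A}(\mathbf{Y})$ with $\sum_{j=1}^n\mathbf{A}_{ij}=d_i'$ for every $i$.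
   Context: Setting: $\mathcal{G}=(\mathcal{V},\mathcal{E})$ is a simple undirected graph with a real random variable $X_i$ attached to each vertex $i$. A subset $\mathcal{V}_S\subseteq\mathcal{V}$ with $|\mathcal{V}_S|=n$ is observed, labeled $1,\dots,n$. $\mathcal{G}_S=(\mathcal{V}_S,\mathcal{E}_S)$ is the subgraph of $\mathcal{G}$ induced by $\mathcal{V}_S$, with $n\times n$ adjacency matrix $\mathbf{A}^\circ$. $\mathcal{G}_R=(\mathcal{V}_S,\mathcal{E}_R)$ is a subgraph with $\mathcal{E}_R\subseteq\mathcal{E}_S$. For $i\in\mathcal{V}_S$, $d_i$ is the degree of $i$ in $\mathcal{G}$. Observed data: $\mathbf{Y}=((X_1,\dots,X_n),(d_1,\dots,d_n),\mathcal{G}_R)$. Let $\overline{X}=\frac1n\sum_i X_i$ and $\hat\sigma^2=\frac1n\sum_i(X_i-\overline{X})^2$. A binary symmetric $n\times n$ matrix $\mathbf{A}$ with zero diagonal is compatible with $\mathbf{Y}$ if $\mathbf{A}_{ij}=\mathbf{A}_{ji}=1$ for every $\{i,j\}\in\mathcal{E}_R$ and $\sum_j\mathbf{A}_{ij}\le d_i$ for every $i$; $\mathcal{A}(\mathbf{Y})$ is the set of compatible matrices (it contains $\mathbf{A}^\circ$). *)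

(* Defs.v *)
From HB Require Import structures.
From mathcomp Require Import all_boot all_order all_algebra.
Set Implicit Arguments. Unset Strict Implicit. Unset Printing Implicit Defensive.
Import Order.TTheory GRing.Theory Num.Theory.
Local Open Scope ring_scope.

Definition simple_graph (V : finType) (e : rel V) : Prop :=
  (forall u v, e u v = e v u) /\ (forall v, ~~ e v v).

Definition degree (V : finType) (e : rel V) (v : V) : nat := #|[set w | e v w]|.

(* adjacency matrix A° of the subgraph G_S induced by the labelled vertices *)
Definition adj_induced (V : finType) (e : rel V) (n : nat) (lab : 'I_n -> V)
  : 'M[bool]_n := \matrix_(i, j) e (lab i) (lab j).

Definition rowsum (n : nat) (A : 'M[bool]_n) (i : 'I_n) : nat :=
  (\sum_(j < n) (A i j : nat))%N.

(* A compatible with Y = (X, d, G_R), G_R given by its edge relation ER *)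
Definition compatible (n : nat) (d : 'I_n -> nat) (ER : rel 'I_n)
  (A : 'M[bool]_n) : Prop :=
  (forall i j, A i j = A j i) /\ (forall i, A i i = false) /\
  (forall i j, ER i j -> A i j /\ A j i) /\
  (forall i, (rowsum A i <= d i)%N).

Definition xbar (R : realFieldType) (n : nat) (X : 'I_n -> R) : R :=
  n%:R^-1 * \sum_(i < n) X i.

Definition sigma2hat (R : realFieldType) (n : nat) (X : 'I_n -> R) : R :=
  n%:R^-1 * \sum_(i < n) (X i - xbar X) ^+ 2.

Definition V2 (R : realFieldType) (n : nat) (X : 'I_n -> R) (A : 'M[bool]_n) : R :=
  sigma2hat X / n%:R * (1 + n%:R^-1 * \sum_(i < n) \sum_(j < n) (A i j : nat)%:R).

Definition V2' (R : realFieldType) (n : nat) (X : 'I_n -> R) (d : 'I_n -> nat) : R :=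
  sigma2hat X / n%:R * (1 + n%:R^-1 * \sum_(i < n) (minn (d i) n.-1)%:R).

(* Main.v *)
Require Import Defs.
From HB Require Import structures.
From mathcomp Require Import all_boot all_order all_algebra.
Import Order.TTheory GRing.Theory Num.Theory.
Local Open Scope ring_scope.

Lemma rowsum_card (n : nat) (A : 'M[bool]_n) i : rowsum A i = #|[pred j | A i j]|.
Proof.
rewrite /rowsum -sum1_card [RHS]big_mkcond /=; apply: eq_bigr => j _.
by rewrite inE; case: (A i j).
Qed.

Lemma rowsum_le_diag (n : nat) (A : 'M[bool]_n) i : A i i = false -> (rowsum A i <= n.-1)%N.
Proof.
move=> Hii; rewrite rowsum_card; have -> : n.-1 = #|predC1 i| by rewrite cardC1 card_ord.
apply: subset_leq_card; apply/subsetP => j; rewrite !inE.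
by apply: contraTneq => ->; rewrite Hii.
Qed.

Lemma V2E (R : realFieldType) n (X : 'I_n -> R) A :
  V2 X A = sigma2hat X / n%:R * (1 + n%:R^-1 * \sum_(i < n) (rowsum A i)%:R).
Proof. by rewrite /V2 /rowsum; congr (_ * (1 + _ * _)); apply: eq_bigr => i _; rewrite natr_sum. Qed.

Lemma sigma_ge0 (R : realFieldType) n (X : 'I_n -> R) : 0 <= sigma2hat X / n%:R.
Proof.
rewrite /sigma2hat; apply: divr_ge0 => //; apply: mulr_ge0; first by rewrite invr_ge0.
by apply: sumr_ge0 => i _; apply: sqr_ge0.
Qed.

Lemma V2_le (R : realFieldType) n (X : 'I_n -> R) A (d : 'I_n -> nat) :
  (forall i, rowsum A i <= minn (d i) n.-1)%N -> V2 X A <= V2' X d.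
Proof.
move=> H; rewrite V2E /V2'; apply: ler_wpM2l; first exact: sigma_ge0.
rewrite lerD2l; apply: ler_wpM2l; first by rewrite invr_ge0.
by apply: ler_sum => i _; rewrite ler_nat.
Qed.

Theorem lemma1 (R : realFieldType) (V : finType) (e : rel V) (n : nat)
  (lab : 'I_n -> V) (X : 'I_n -> R) (ER : rel 'I_n) (Am : 'M[bool]_n) :
  simple_graph e ->
  injective lab ->
  (forall i j, ER i j = ER j i) ->
  (forall i j, ER i j -> e (lab i) (lab j)) ->
  let d := fun i => degree e (lab i) in
  compatible d ER Am ->
  (forall A, compatible d ER A -> V2 X A <= V2 X Am) ->
  [/\ V2 X (adj_induced e lab) <= V2 X Am,
      V2 X Am <= V2' X d &
      ((exists A, compatible d ER A /\ forall i, rowsum A i = minn (d i) n.-1) ->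
       V2 X Am = V2' X d)].
Proof.
move=> [esym eirr] labI ERsym ERe d cAm Hmax.
have cmpmin : forall A, compatible d ER A -> forall i, (rowsum A i <= minn (d i) n.-1)%N.
  move=> A [_ [Hd [_ Hr]]] i; rewrite leq_min Hr; exact: rowsum_le_diag.
have leAm : V2 X Am <= V2' X d by apply: V2_le; apply: cmpmin.
split => //.
- apply: Hmax; split; [|split; [|split]].
  + by move=> i j; rewrite /adj_induced !mxE esym.
  + by move=> i; rewrite /adj_induced mxE; apply/negbTE.
  + move=> i j Hij; rewrite /adj_induced !mxE; split; apply: ERe => //.
    by rewrite ERsym.
  + move=> i; rewrite rowsum_card /d /degree.
    rewrite -(card_imset _ labI); apply: subset_leq_card; apply/subsetP => w.
    by case/imsetP => j; rewrite !inE /adj_induced mxE => Hj ->.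
- move=> [A [cA HA]]; apply/eqP; rewrite eq_le leAm /=.
  have <- : V2 X A = V2' X d.
    by rewrite V2E /V2'; congr (_ * (1 + _ * _)); apply: eq_bigr => i _; rewrite HA.
  exact: Hmax.
Qed.
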